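(* Let $\Sigma$ be a ranked alphabet, $B$ a strong bimonoid and $\mathcal{A}=(Q,\delta,F)$ a $(\Sigma,B)$-wta. If $\mathcal{A}$ has the finite order property, then $[\![\mathcal{R}(\mathcal{A})]\!]^{\mathrm{run}}=[\![\mathcal{A}]\!]^{\mathrm{run}}$.
   Context: Ranked alphabet $\Sigma$ ($\Sigma^{(0)}\ne\emptyset$), trees $T_\Sigma$, positions $\mathrm{pos}(\xi)$ ($\mathrm{pos}(\sigma(\xi_1,\dots,\xi_k))=\{\varepsilon\}\cup\{iv\mid v\in\mathrm{pos}(\xi_i)\}$); strong bimonoid $(B,\oplus,\otimes,\mathbb{0},\mathbb{1})$ (commutative monoid $(B,\oplus,\mathbb{0})$, monoid $(B,\otimes,\mathbb{1})$, $\mathbb{0}\ne\mathbb{1}$, $\mathbb{0}$ absorbing, no distributivity). For $b\in B$, $nb$ is the $n$-fold sum ($0b=\mathbb{0}$); $b$ has finite order if $\{nb\mid n\in\mathbb{N}\}$ is finite; then index $i(b)$ is the least $i\ge1$ with $ib=(i+k)b$ for some $k\ge1$, period $p(b)$ the least $p\ge1$ with $i(b)b=(i(b)+p)b$. $(\Sigma,B)$-wta $\mathcal{A}=(Q,\delta,F)$: $Q$ finite nonempty, $\delta_k:Q^k\times\Sigma^{(k)}\times Q\to B$, $F:Q\to B$. Runs: maps $\rho:\mathrm{pos}(\xi)\to Q$ ($R_{\mathcal{A}}(\xi)$; $q$-runs $R_{\mathcal{A}}(q,\xi)$ those with $\rho(\varepsilon)=q$); $\rho|_i(w)=\rho(iw)$;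 $\mathrm{wt}_{\mathcal{A}}(\rho)=\big(\bigotimes_{i=1}^k\mathrm{wt}_{\mathcal{A}}(\rho|_i)\big)\otimes\delta_k(\rho(1)\dots\rho(k),\sigma,\rho(\varepsilon))$; $[\![\mathcal{A}]\!]^{\mathrm{run}}(\xi)=\bigoplus_{\rho\in R_{\mathcal{A}}(\xi)}\mathrm{wt}_{\mathcal{A}}(\rho)\otimes F_{\rho(\varepsilon)}$. $H_{\mathcal{A}}$ is the smallest subset of $B$ containing $\bigcup_k\mathrm{im}(\delta_k)$ and closed under $\otimes$. $\mathcal{A}$ has the finite order property if $H_{\mathcal{A}}$ is finite and every element of $H_{\mathcal{A}}\otimes\mathrm{im}(F)=\{a\otimes c\mid a\in H_{\mathcal{A}},c\in\mathrm{im}(F)\}$ has finite order in $(B,\oplus,\mathbb{0})$. Then let $i_{\mathcal{A}}=\max\{i(b)\mid b\in H_{\mathcal{A}}\otimes\mathrm{im}(F)\}$, $p_{\mathcal{A}}=\mathrm{lcm}\{p(b)\mid b\in H_{\mathcal{A}}\otimes\mathrm{im}(F)\}$, $J_{\mathcal{A}}(n)=n$ if $n<i_{\mathcal{A}}$ and $J_{\mathcal{A}}(n)=i_{\mathcal{A}}+((n-i_{\mathcal{A}})\bmod p_{\mathcal{A}})$ otherwise. For $\xi\in T_\Sigma$ and $(q,b)\in Q\times H_{\mathcal{A}}$ let $p_\xi(q,b)=|\{\rho\in R_{\mathcal{A}}(q,\xi)\mid\mathrm{wt}_{\mathcal{A}}(\rho)=b\}|$ and $\pi_\xi(q,b)=J_{\mathcal{A}}(p_\xi(q,b))$,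 so $\pi_\xi:Q\times H_{\mathcal{A}}\to[0,i_{\mathcal{A}}+p_{\mathcal{A}}-1]$. $\mathcal{R}(\mathcal{A})=(Q_{\mathcal{R}},\delta_{\mathcal{R}},F_{\mathcal{R}})$ is the wta with $Q_{\mathcal{R}}=\{\pi_\xi\mid\xi\in T_\Sigma\}$ (a finite set); $(\delta_{\mathcal{R}})_k(\pi_{\xi_1}\dots\pi_{\xi_k},\sigma,\pi)=\mathbb{1}$ if $\pi=\pi_{\sigma(\xi_1,\dots,\xi_k)}$ and $\mathbb{0}$ otherwise (this depends only on $\pi_{\xi_1},\dots,\pi_{\xi_k}$, not on the chosen $\xi_i$); $(F_{\mathcal{R}})_{\pi_\xi}=\bigoplus_{(q,b)\in Q\times H_{\mathcal{A}}}\pi_\xi(q,b)(b\otimes F_q)$. *)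

(* Defs.v *)
From mathcomp Require Import all_boot.
From mathcomp Require Import boolp.

Set Implicit Arguments.
Unset Strict Implicit.
Unset Printing Implicit Defensive.

Record strong_bimonoid (B : eqType) := StrongBimonoid {
  sb_add : B -> B -> B;
  sb_mul : B -> B -> B;
  sb_zero : B;
  sb_one : B;
  sb_addA : associative sb_add;
  sb_addC : commutative sb_add;
  sb_add0l : left_id sb_zero sb_add;
  sb_mulA : associative sb_mul;
  sb_mul1l : left_id sb_one sb_mul;
  sb_mul1r : right_id sb_one sb_mul;
  sb_mul0l : left_zero sb_zero sb_mul;
  sb_mul0r : right_zero sb_zero sb_mul;
  sb_zero_neq_one : sb_zero <> sb_one }.

Inductive tree (Sigma : Type) := Node of Sigma & seq (tree Sigma).
Arguments Node {Sigma}.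

Fixpoint wf_tree (Sigma : Type) (rank : Sigma -> nat) (t : tree Sigma) : bool :=
  let: Node s ts := t in
  (size ts == rank s) &&
  (fix wfl (ts : seq (tree Sigma)) : bool :=
     if ts is t' :: ts' then wf_tree rank t' && wfl ts' else true) ts.

(* positions are words over nat (children numbered 1..k); runs are maps
   positions -> states, represented as functions on seq nat. *)
Definition restr (S : Type) (rho : seq nat -> S) (i : nat) : seq nat -> S :=
  fun w => rho (i :: w).

Definition mkrun (S : Type) (q : S) (rs : seq (seq nat -> S)) : seq nat -> S :=
  fun w => match w with
           | [::] => q
           | i :: w' => nth (fun _ => q) rs i.-1 w'
           end.

Fixpoint cart (X : Type) (ss : seq (seq X)) : seq (seq X) :=
  match ss with
  | [::] => [:: [::]]
  | s :: ss' => [seq x :: r | x <- s, r <- cart ss']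
  end.

Section RunSemantics.
Variables (Sigma : Type) (B : eqType) (SB : strong_bimonoid B).
Variables (S : Type) (states : seq S)
          (delta : seq S -> Sigma -> S -> B) (F : S -> B).

(* R(xi): an enumeration (one function per map pos(xi) -> S) of all runs *)
Fixpoint runs (t : tree Sigma) : seq (seq nat -> S) :=
  let: Node s ts := t in
  [seq mkrun q rs | q <- states,
     rs <- cart ((fix rl (ts : seq (tree Sigma)) : seq (seq (seq nat -> S)) :=
                    if ts is t' :: ts' then runs t' :: rl ts' else [::]) ts)].

Fixpoint wt (t : tree Sigma) (rho : seq nat -> S) : B :=
  let: Node s ts := t in
  sb_mul SB
    ((fix wl (ts : seq (tree Sigma)) (i : nat) : B :=
        if ts is t' :: ts' then sb_mul SB (wt t' (restr rho i)) (wl ts' i.+1)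
        else sb_one SB) ts 1)
    (delta [seq rho [:: i] | i <- iota 1 (size ts)] s (rho [::])).

Definition bsum (l : seq B) : B := foldr (sb_add SB) (sb_zero SB) l.

Definition sem_run (t : tree Sigma) : B :=
  bsum [seq sb_mul SB (wt t rho) (F (rho [::])) | rho <- runs t].

End RunSemantics.

(* a duplicate-free list enumerating exactly the finite set P (classical
   choice); [::] if P is not finite *)
Definition enum_of (T : eqType) (P : T -> Prop) : seq T :=
  match pselect (exists s : seq T, uniq s /\ forall x, x \in s <-> P x) with
  | left h => projT1 (cid h)
  | right _ => [::]
  end.

Section FiniteOrder.
Variables (B : eqType) (SB : strong_bimonoid B).

Definition nsum (n : nat) (b : B) : B := iter n (sb_add SB b) (sb_zero SB).

Definition finite_order (b : B) : Prop :=
  exists s : seq B, forall n, nsum n b \in s.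

Definition index_pred (b : B) : pred nat :=
  fun i => (0 < i) && `[< exists k, 0 < k /\ nsum i b = nsum (i + k) b >].

Definition index (b : B) : nat :=
  match pselect (exists i, index_pred b i) with
  | left h => ex_minn h
  | right _ => 0
  end.

Definition period_pred (b : B) : pred nat :=
  fun p => (0 < p) && (nsum (index b) b == nsum (index b + p) b).

Definition period (b : B) : nat :=
  match pselect (exists p, period_pred b p) with
  | left h => ex_minn h
  | right _ => 0
  end.
End FiniteOrder.

Section Construction.
Variables (Sigma : finType) (rank : Sigma -> nat).
Variables (B : eqType) (SB : strong_bimonoid B).
Variables (Q : finType) (delta : seq Q -> Sigma -> Q -> B) (F : Q -> B).

Inductive inH : B -> Prop :=
  | inH_delta (s : Sigma) (qs : seq Q) (q : Q) :
      size qs = rank s -> inH (delta qs s q)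
  | inH_mul (a c : B) : inH a -> inH c -> inH (sb_mul SB a c).

Definition finite_order_property : Prop :=
  (exists s : seq B, forall b, inH b -> b \in s) /\
  (forall a q, inH a -> finite_order SB (sb_mul SB a (F q))).

Definition Hlist : seq B := enum_of inH.

Definition HF : seq B := [seq sb_mul SB a (F q) | a <- Hlist, q <- enum Q].

Definition iA : nat := \max_(b <- HF) index SB b.
Definition pA : nat := foldr lcmn 1 [seq period SB b | b <- HF].

Definition JA (n : nat) : nat := if n < iA then n else iA + (n - iA) %% pA.

Definition semA : tree Sigma -> B := sem_run SB (enum Q) delta F.

Definition QH : seq (Q * B) := [seq (q, a) | q <- enum Q, a <- Hlist].

Definition pcount (t : tree Sigma) (q : Q) (b : B) : nat :=
  count (fun rho => (rho [::] == q) && (wt SB delta t rho == b))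
        (runs (enum Q) t).

(* pi_xi, represented as the list of its values along QH *)
Definition pi_of (t : tree Sigma) : seq nat :=
  [seq JA (pcount t qb.1 qb.2) | qb <- QH].

Definition QR : seq (seq nat) :=
  enum_of (fun p : seq nat => exists t, wf_tree rank t /\ pi_of t = p).

Definition deltaR (ps : seq (seq nat)) (s : Sigma) (p : seq nat) : B :=
  if `[< exists ts : seq (tree Sigma),
           wf_tree rank (Node s ts) /\ map pi_of ts = ps /\ pi_of (Node s ts) = p >]
  then sb_one SB else sb_zero SB.

Definition FR (p : seq nat) : B :=
  bsum SB [seq nsum SB nqb.1 (sb_mul SB nqb.2.2 (F nqb.2.1)) | nqb <- zip p QH].

Definition semR : tree Sigma -> B := sem_run SB QR deltaR FR.

End Construction.

(* Main.v *)
From HB Require Import structures.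
Require Import Defs.
From mathcomp Require Import all_boot.
From mathcomp Require Import boolp.
From mathcomp Require Import zify.

Set Implicit Arguments.
Unset Strict Implicit.
Unset Printing Implicit Defensive.


Definition badd {B : eqType} (SB : strong_bimonoid B) := sb_add SB.
HB.instance Definition _ (B : eqType) (SB : strong_bimonoid B) :=
  Monoid.isComLaw.Build B (sb_zero SB) (badd SB) (@sb_addA B SB) (@sb_addC B SB) (@sb_add0l B SB).

Section TreeInd.
Variable Sigma : Type.
Variable P : tree Sigma -> Prop.
Hypothesis HP : forall s ts, (forall t, List.In t ts -> P t) -> P (Node s ts).
Fixpoint tree_ind' (t : tree Sigma) : P t :=
  match t with
  | Node s ts => @HP s ts
      ((fix aux (l : seq (tree Sigma)) : forall t, List.In t l -> P t :=
         match l with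
         | [::] => fun t (H : List.In t [::]) => match H with end
         | t' :: l' => fun t H => match H with
              | or_introl E => eq_ind t' P (tree_ind' t') t E
              | or_intror H' => aux l' t H'
              end
         end) ts)
  end.
End TreeInd.

Lemma In_all (T : Type) (p : pred T) (l : seq T) x : all p l -> List.In x l -> p x.
Proof. elim: l => //= y l IH /andP [Hy Hl] [<-|H]; [done| exact: IH]. Qed.

Lemma map_ext_In (T U : Type) (f g : T -> U) (l : seq T) :
  (forall x, List.In x l -> f x = g x) -> map f l = map g l.
Proof. elim: l => //= x l IH H; rewrite H ?IH //; [move=> y Hy; apply: H; by right| by left]. Qed.

Lemma map_all_eq (T U : Type) (p : pred T) (f g : T -> U) (l : seq T) :
  (forall x, p x -> f x = g x) -> all p l -> map f l = map g l.
Proof. move=> H; elim: l => //= x l IH /andP [Hx Hl]; by rewrite H // IH. Qed.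

Lemma wf_node (Sigma : Type) (rank : Sigma -> nat) s ts :
  wf_tree rank (Node s ts) = (size ts == rank s) && all (wf_tree rank) ts.
Proof. rewrite /=; congr andb; elim: ts => //= t ts ->. Qed.

Lemma runs_node (Sigma S : Type) (states : seq S) s (ts : seq (tree Sigma)) :
  runs states (Node s ts) = [seq mkrun q rs | q <- states, rs <- cart (map (runs states) ts)].
Proof. rewrite /=; apply: eq_allpairsr => q; congr cart; elim: ts => //= t ts ->. Qed.

Lemma all_cart_size (X : Type) (Ls : seq (seq X)) :
  all (fun rs => size rs == size Ls) (cart Ls).
Proof.
elim: Ls => //= L Ls IH; elim: L => //= x L IHL; move: IHL.
rewrite all_cat => ->; rewrite andbT all_map.
by apply: sub_all IH => rs /=.
Qed.

Definition zipw (T X Y : Type) (g : T -> X -> Y) (ts : seq T) (rs : seq X) : seq Y :=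
  [seq g p.1 p.2 | p <- zip ts rs].

Lemma cart_map_dep (T X Y : Type) (g : T -> X -> Y) (h : T -> seq X) (ts : seq T) :
  cart [seq map (g t) (h t) | t <- ts] = [seq zipw g ts rs | rs <- cart (map h ts)].
Proof.
elim: ts => //= t ts IH.
by rewrite IH allpairs_mapl allpairs_mapr map_allpairs.
Qed.

Section Gen.
Variables (Sigma : Type) (B : eqType) (SB : strong_bimonoid B) (S : Type).
Local Notation mul := (sb_mul SB).
Local Notation add := (sb_add SB).
Local Notation one := (sb_one SB).
Local Notation zero := (sb_zero SB).

Definition Wp (l : seq B) : B := foldr mul one l.

Fixpoint wlist (delta : seq S -> Sigma -> S -> B) (rho : seq nat -> S)
   (ts : seq (tree Sigma)) (i : nat) : B :=
  if ts is t' :: ts' then mul (wt SB delta t' (restr rho i)) (wlist delta rho ts' i.+1)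
  else one.

Lemma wt_node delta s ts rho : wt SB delta (Node s ts) rho =
  mul (wlist delta rho ts 1) (delta [seq rho [:: i] | i <- iota 1 (size ts)] s (rho [::])).
Proof. rewrite /=; congr (mul _ _); elim: ts 1 => //= t ts IH i; by rewrite IH. Qed.

Lemma wlist_mk delta q rs ts i0 rho : size rs = size ts ->
  (forall j, j < size ts -> restr rho (i0 + j) = nth (fun _ => q) rs j) ->
  wlist delta rho ts i0 = Wp [seq wt SB delta p.1 p.2 | p <- zip ts rs].
Proof.
elim: ts rs i0 => [|t ts IH] [|r rs] i0 //= [Hs] Hr.
rewrite (_ : restr rho i0 = r); last by rewrite -(addn0 i0) Hr.
rewrite (IH rs i0.+1) // => j Hj.
by rewrite addSnnS Hr.
Qed.

Definition key delta (t : tree Sigma) (rho : seq nat -> S) : S * B := (rho [::], wt SB delta t rho).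
Definition Klist states delta t := [seq key delta t rho | rho <- runs states t].
Definition comb (delta : seq S -> Sigma -> S -> B) s q (ks : seq (S * B)) : S * B :=
  (q, mul (Wp (map snd ks)) (delta (map fst ks) s q)).

Lemma iota_nth_root q (rs : seq (seq nat -> S)) :
  [seq nth (fun _ => q) rs i.-1 [::] | i <- iota 1 (size rs)] = [seq r [::] | r <- rs].
Proof.
have -> : iota 1 (size rs) = map succn (iota 0 (size rs)).
  by rewrite -(addn0 1) iotaDl.
rewrite -map_comp /=.
rewrite -{3}(mkseq_nth (fun _ => q) rs) /mkseq -map_comp. done.
Qed.

Lemma key_mk delta s ts q rs : size rs = size ts ->
  key delta (Node s ts) (mkrun q rs) = comb delta s q (zipw (key delta) ts rs).
Proof.
move=> Hs; rewrite /key /comb /zipw wt_node /=; congr (_, mul _ _).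
  rewrite -map_comp (@wlist_mk delta q rs) //.
congr (delta _ s q); rewrite -map_comp /= -Hs iota_nth_root.
have -> : [seq (p.2 : seq nat -> S) [::] | p <- zip ts rs] = [seq r [::] | r <- unzip2 (zip ts rs)].
  by rewrite /unzip2 -map_comp.
by rewrite unzip2_zip // Hs.
Qed.

Lemma K_node states delta s ts :
  Klist states delta (Node s ts) =
  [seq comb delta s q ks | q <- states, ks <- cart (map (Klist states delta) ts)].
Proof.
rewrite /Klist runs_node map_allpairs.
rewrite (cart_map_dep (key delta) (runs states)) allpairs_mapr.
have Hall := all_cart_size [seq runs states i | i <- ts]; rewrite size_map in Hall.
move: (cart [seq runs states i | i <- ts]) Hall => C Hall.
elim: states => //= q st ->; congr cat.
apply: (map_all_eq _ Hall) => rs /eqP Hs; by rewrite key_mk.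
Qed.

End Gen.


Lemma regroup (R : Type) (idx : R) (op : Monoid.com_law idx) (X : eqType)
  (D L : seq X) (g : X -> R) : uniq D -> all (mem D) L ->
  \big[op/idx]_(x <- L) g x = \big[op/idx]_(y <- D) iter (count_mem y L) (op (g y)) idx.
Proof.
move=> uD aL.
transitivity (\big[op/idx]_(x <- L) \big[op/idx]_(y <- D | y == x) g y).
  apply: eq_big_seq => x Hx.
  rewrite -big_filter (filter_pred1_uniq uD) ?big_seq1 //.
  by move/allP: aL => /(_ x Hx).
under eq_bigr do rewrite big_mkcond.
rewrite exchange_big; apply: eq_bigr => y _.
rewrite -big_mkcond big_const_seq; congr iter; apply: eq_count => x /=; by rewrite eq_sym.
Qed.

Section J.
Variables i p : nat.
Definition Jf n := if n < i then n else i + (n - i) %% p.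

Lemma J_add_l a a' b : Jf a = Jf a' -> Jf (a + b) = Jf (a' + b).
Proof.
rewrite /Jf; case: (ltnP a i) => Ha; case: (ltnP a' i) => Ha' H.
- by rewrite H.
- lia.
- lia.
rewrite !ifF; try lia.
have H1 : (a - i) %% p = (a' - i) %% p by lia.
congr (i + _); rewrite -!addnBAC // -modnDml H1 modnDml //.
Qed.

Lemma J_mul_l a a' b : Jf a = Jf a' -> Jf (a * b) = Jf (a' * b).
Proof.
case: b => [|b]; first by rewrite !muln0.
rewrite /Jf; case: (ltnP a i) => Ha; case: (ltnP a' i) => Ha' H.
- by rewrite H.
- lia.
- lia.
have H1 : (a - i) %% p = (a' - i) %% p by lia.
have E : forall x, i <= x -> x * b.+1 - i = (x - i) * b.+1 + i * b.
  by move=> x hx; nia.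
rewrite !ifF; try nia.
congr (i + _); rewrite !E // -modnDml -modnMml H1 modnMml modnDml //.
Qed.

Lemma J_add a a' b b' : Jf a = Jf a' -> Jf b = Jf b' -> Jf (a + b) = Jf (a' + b').
Proof. move=> H1 H2; rewrite (J_add_l b H1) addnC (J_add_l a' H2) addnC //. Qed.

Lemma J_mul a a' b b' : Jf a = Jf a' -> Jf b = Jf b' -> Jf (a * b) = Jf (a' * b').
Proof. move=> H1 H2; rewrite (J_mul_l b H1) mulnC (J_mul_l a' H2) mulnC //. Qed.

Lemma J_sum (X : Type) (D : seq X) (f g : X -> nat) :
  (forall x, Jf (f x) = Jf (g x)) -> Jf (\sum_(x <- D) f x) = Jf (\sum_(x <- D) g x).
Proof.
move=> H; elim: D => [|x D IH]; first by rewrite !big_nil.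
by rewrite !big_cons; apply: J_add.
Qed.

Definition eqJ (X : eqType) (L L' : seq X) := forall k, Jf (count_mem k L) = Jf (count_mem k L').

Fixpoint rel2 (X : Type) (R : X -> X -> Prop) (s1 s2 : seq X) : Prop :=
  match s1, s2 with
  | [::], [::] => True
  | x :: s1', y :: s2' => R x y /\ rel2 R s1' s2'
  | _, _ => False
  end.

Lemma count_cons_allpairs (X : Type) (P : pred (seq X)) (L : seq X) (C : seq (seq X)) :
  count P [seq x :: r | x <- L, r <- C] = \sum_(x <- L) count (fun r => P (x :: r)) C.
Proof.
elim: L => [|x L IHL] /=; first by rewrite big_nil.
by rewrite count_cat count_map IHL big_cons.
Qed.

Lemma Lcart (X : eqType) (D : seq X) : uniq D -> forall Ls Ls',
  rel2 (fun L L' => eqJ L L' /\ all (mem D) L /\ all (mem D) L') Ls Ls' ->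
  forall P, Jf (count P (cart Ls)) = Jf (count P (cart Ls')).
Proof.
move=> uD; elim=> [|L Ls IH] [|L' Ls'] //= [[HJ [HL HL']] Hr] P.
rewrite !count_cons_allpairs.
rewrite (regroup _ _ uD HL) (regroup _ _ uD HL').
apply: J_sum => x; rewrite !iter_addn_0.
apply: J_mul; [exact: IH | exact: HJ].
Qed.

End J.


Lemma enum_ofP (T : eqType) (P : T -> Prop) :
  (exists s : seq T, forall x, P x -> x \in s) ->
  uniq (enum_of P) /\ forall x, x \in enum_of P <-> P x.
Proof.
move=> [s Hs]; rewrite /enum_of; case: pselect => [h|nh].
  by case: (cid h) => l /= [Hu Hl].
exfalso; apply: nh; exists (undup [seq x <- s | `[< P x >]]); split.
  exact: undup_uniq.
move=> x; rewrite mem_undup mem_filter; split.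
  by case/andP => /asboolP.
by move=> Px; rewrite Hs // andbT; apply/asboolP.
Qed.

Section NSum.
Variables (B : eqType) (SB : strong_bimonoid B).
Local Notation add := (sb_add SB).
Local Notation zero := (sb_zero SB).
Local Notation nsum := (nsum SB).

Lemma iter_add_shift n c y : iter n (add c) y = add (nsum n c) y.
Proof.
elim: n => [|n IH] /=; first by rewrite sb_add0l.
by rewrite IH sb_addA.
Qed.

Lemma nsumD m n c : nsum (m + n) c = add (nsum m c) (nsum n c).
Proof. by rewrite /Defs.nsum iterD iter_add_shift. Qed.

Lemma nsumS n c : nsum n.+1 c = add c (nsum n c).
Proof. by []. Qed.

Lemma index_spec c : finite_order SB c ->
  [/\ 0 < Defs.index SB c, 0 < period SB c &
      nsum (Defs.index SB c) c = nsum (Defs.index SB c + period SB c) c].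
Proof.
move=> [s Hs].
have Hex : exists i, index_pred SB c i.
  pose l := [seq nsum n c | n <- iota 1 (size s).+1].
  have : ~~ uniq l.
    apply/negP => Hu.
    have Hsub : {subset l <= s} by move=> x /mapP [n _ ->].
    by have := uniq_leq_size Hu Hsub; rewrite size_map size_iota ltnn.
  move/(uniqPn zero) => [i [j [Hij Hj Eij]]].
  rewrite size_map size_iota in Hj.
  rewrite !(nth_map 0) ?size_iota // in Eij; last by apply: ltn_trans Hj.
  rewrite !nth_iota // in Eij; last by apply: ltn_trans Hj.
  exists i.+1; apply/andP; split => //; apply/asboolP; exists (j - i); split.
    by rewrite subn_gt0.
  by rewrite (_ : i.+1 + (j - i) = 1 + j) //; lia.
have Hi : index_pred SB c (Defs.index SB c).
  rewrite /Defs.index; case: pselect => [h|nh]; last by exfalso; apply: nh.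
  by case: ex_minnP.
move: Hi => /andP [Hi0 /asboolP [k [Hk Ek]]].
have Hpex : exists p, period_pred SB c p.
  by exists k; rewrite /period_pred Hk Ek eqxx.
have Hp : period_pred SB c (period SB c).
  rewrite /period; case: pselect => [h|nh]; last by exfalso; apply: nh.
  by case: ex_minnP.
by move: Hp => /andP [Hp0 /eqP Ep].
Qed.

Section Per.
Variables (c : B) (i0 p0 : nat).
Hypothesis E : nsum i0 c = nsum (i0 + p0) c.

Lemma nsum_period m : i0 <= m -> nsum (m + p0) c = nsum m c.
Proof.
move=> Hm; rewrite -(subnK Hm) -addnA nsumD -E -nsumD.
done.
Qed.

Lemma nsum_periodq q m : i0 <= m -> nsum (m + q * p0) c = nsum m c.
Proof.
move=> Hm; elim: q => [|q IH]; first by rewrite mul0n addn0.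
rewrite mulSn addnCA addnC nsum_period ?IH //.
by apply: leq_trans Hm (leq_addr _ _).
Qed.

Lemma nsum_mod m : i0 <= m -> nsum m c = nsum (i0 + (m - i0) %% p0) c.
Proof.
move=> Hm.
rewrite -{1}(subnKC Hm) {1}(divn_eq (m - i0) p0).
rewrite addnA (addnC _ (_ %% _)) addnA nsum_periodq ?leq_addl // addnC //.
Qed.
End Per.

End NSum.


Lemma bsum_big (B : eqType) (SB : strong_bimonoid B) (T : Type) (f : T -> B) (l : seq T) :
  bsum SB (map f l) = \big[badd SB/sb_zero SB]_(x <- l) f x.
Proof. elim: l => [|x l IH] /=; first by rewrite big_nil. by rewrite big_cons IH. Qed.

Lemma zip_map_l (T U : Type) (f : T -> U) (s : seq T) :
  zip (map f s) s = map (fun x => (f x, x)) s.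
Proof. by elim: s => //= x s ->. Qed.

Lemma dvdn_foldr_lcm (x : nat) (l : seq nat) : x \in l -> x %| foldr lcmn 1 l.
Proof.
elim: l => //= y l IH; rewrite inE => /orP [/eqP ->|H]; first exact: dvdn_lcml.
exact: dvdn_trans (IH H) (dvdn_lcmr _ _).
Qed.

Lemma foldr_lcm_gt0 (l : seq nat) : all (fun x => 0 < x) l -> 0 < foldr lcmn 1 l.
Proof. elim: l => //= y l IH /andP [Hy Hl]; by rewrite lcmn_gt0 Hy IH. Qed.

Lemma count_allpairs (X Y Z : Type) (P : pred Z) (f : X -> Y -> Z) (s : seq X) (t : seq Y) :
  count P [seq f x y | x <- s, y <- t] = \sum_(x <- s) count (fun y => P (f x y)) t.
Proof.
elim: s => [|x s IH] /=; first by rewrite big_nil.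
by rewrite count_cat count_map IH big_cons.
Qed.

Lemma filter_allpairs (X Y Z : Type) (P : pred Z) (f : X -> Y -> Z) (s : seq X) (t : seq Y) :
  filter P [seq f x y | x <- s, y <- t] = flatten [seq filter P (map (f x) t) | x <- s].
Proof. elim: s => //= x s IH; by rewrite filter_cat IH. Qed.

Lemma flatten_single (X : eqType) (Y : Type) (a : Y) (x : X) (l : seq X) :
  uniq l -> x \in l -> flatten [seq if y == x then [:: a] else [::] | y <- l] = [:: a].
Proof.
have H0 : forall l, x \notin l -> flatten [seq if y == x then [:: a] else [::] | y <- l] = [::].
  by elim=> //= y l' IH; rewrite inE negb_or eq_sym => /andP [/negbTE -> /IH].
elim: l => //= y l IH /andP [Hy Hu]; rewrite inE => /orP [/eqP E|H].
  by rewrite -E eqxx /= H0 // E.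
have -> : (y == x) = false by apply/eqP => E; move: Hy; rewrite E H.
exact: IH.
Qed.

Lemma filter_impl (X : Type) (a b : pred X) (s : seq X) :
  (forall x, a x -> b x) -> filter a s = filter a (filter b s).
Proof.
move=> H; elim: s => //= x s IH.
case Hb: (b x) => /=; first by rewrite IH.
by case Ha: (a x) => //; move: (H x Ha); rewrite Hb.
Qed.

Lemma filter_all_cart (X : Type) (P : pred X) (Ls : seq (seq X)) :
  filter (all P) (cart Ls) = cart (map (filter P) Ls).
Proof.
elim: Ls => //= L Ls IH; rewrite -IH.
elim: L => //= x L IHL; rewrite filter_cat IHL filter_map.
case Hx: (P x) => /=.
  by congr (map _ _ ++ _); apply: eq_filter => r /=; rewrite Hx.
have -> : filter (preim (cons x) (all P)) (cart Ls) = [::].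
  by elim: (cart Ls) => //= r C ->; rewrite Hx.
by [].
Qed.

Lemma cart_single (X T : Type) (a : T -> X) (ts : seq T) :
  cart (map (fun t => [:: a t]) ts) = [:: map a ts].
Proof. by elim: ts => //= t ts ->. Qed.

Lemma mem_cart_nseq (M : nat) (l : seq nat) :
  all (fun x => x < M) l -> l \in cart (nseq (size l) (iota 0 M)).
Proof.
elim: l => [|x l IH] /=; first by rewrite inE.
move=> /andP [Hx Hl].
apply: (allpairs_f (fun x r => x :: r)); first by rewrite mem_iota.
exact: IH.
Qed.


Section Main.
Variables (Sigma : finType) (rank : Sigma -> nat) (B : eqType) (SB : strong_bimonoid B).
Variables (Q : finType) (delta : seq Q -> Sigma -> Q -> B) (F : Q -> B).
Hypothesis FOP : finite_order_property rank SB delta F.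

Local Notation mul := (sb_mul SB).
Local Notation one := (sb_one SB).
Local Notation zero := (sb_zero SB).
Local Notation HL := (Hlist rank SB delta).
Local Notation QHl := (QH rank SB delta).
Local Notation J := (JA rank SB delta F).
Local Notation piof := (Defs.pi_of rank SB delta F).
Local Notation K := (Klist SB (enum Q) delta).
Local Notation wf := (wf_tree rank).

Lemma HL_spec : uniq HL /\ forall b, b \in HL <-> inH rank SB delta b.
Proof. by apply: enum_ofP; case: FOP. Qed.

Lemma QH_uniq : uniq QHl.
Proof.
apply: allpairs_uniq; [exact: enum_uniq | exact: HL_spec.1 |].
by move=> [? ?] [? ?] _ _ /= [-> ->].
Qed.

Lemma mem_QH (k : Q * B) : (k \in QHl) = (k.2 \in HL).
Proof.
apply/idP/idP.
  by case/allpairsP => [[x y] [_ Hy ->]].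
move=> H; case: k H => q b H.
by apply: (allpairs_f (fun x y => (x, y))); rewrite ?mem_enum.
Qed.



Lemma wt_inH t : wf t -> forall rho, inH rank SB delta (wt SB delta t rho).
Proof.
elim/tree_ind': t => s ts IH; rewrite wf_node => /andP [/eqP Hs Hall] rho.
have Hd : inH rank SB delta (delta [seq rho [:: i] | i <- iota 1 (size ts)] s (rho [::])).
  by apply: inH_delta; rewrite size_map size_iota.
rewrite wt_node.
have : forall i, (size ts = 0) \/ inH rank SB delta (wlist SB delta rho ts i).
  elim: ts IH Hall {Hs Hd} => [|t ts IHl IH] /=; first by move=> _ _ i; apply: or_introl.
  move=> /andP [Ht Hts] i; apply: or_intror.
  have Hw : inH rank SB delta (wt SB delta t (restr rho i)).
    exact: (IH t (or_introl erefl) Ht).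
  have := IHl (fun t' H => IH t' (or_intror H)) Hts i.+1.
  case => [E|Hw']; last exact: (inH_mul Hw Hw').
  by rewrite (size0nil E) /= sb_mul1r.
move/(_ 1); case => [E|Hw]; last exact: (inH_mul Hw Hd).
have -> : wlist SB delta rho ts 1 = one by rewrite (size0nil E).
by rewrite sb_mul1l.
Qed.

Lemma K_in_QH t : wf t -> all (mem QHl) (K t).
Proof.
move=> Hwf; rewrite /Klist all_map.
elim: (runs _ _) => //= rho l ->; rewrite andbT.
rewrite (mem_QH (key SB delta t rho)) /=; apply/HL_spec.2; exact: wt_inH.
Qed.

Lemma pi_of_K t : piof t = [seq J (count_mem k (K t)) | k <- QHl].
Proof.
rewrite /Defs.pi_of; apply: eq_map => [[q b]] /=; congr J.
by rewrite /pcount /Klist count_map; apply: eq_count => rho /=; rewrite xpair_eqE.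
Qed.

Lemma JA_Jf n : J n = Jf (iA rank SB delta F) (pA rank SB delta F) n.
Proof. by []. Qed.

Lemma pi_eqJ t t' : wf t -> wf t' -> piof t = piof t' ->
  eqJ (iA rank SB delta F) (pA rank SB delta F) (K t) (K t').
Proof.
move=> Hw Hw' E k.
case Hk: (k \in QHl).
  rewrite !pi_of_K in E; move/eq_in_map: E => /(_ k Hk).
  by rewrite !JA_Jf.
have Hn : forall t, wf t -> count_mem k (K t) = 0.
  move=> t0 H0; apply/count_memPn; apply/negP => Hin.
  by move/allP: (K_in_QH H0) => /(_ k Hin); rewrite /= Hk.
by rewrite !Hn.
Qed.

Lemma determinacy s ts ts' : wf (Node s ts) -> wf (Node s ts') ->
  map piof ts = map piof ts' -> piof (Node s ts) = piof (Node s ts').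
Proof.
rewrite !wf_node => /andP [_ Ha] /andP [_ Ha'] Em.
have Hrel : rel2 (fun L L' => eqJ (iA rank SB delta F) (pA rank SB delta F) L L' /\
     all (mem QHl) L /\ all (mem QHl) L') (map K ts) (map K ts').
  elim: ts ts' Ha Ha' Em => [|t ts IH] [|t' ts'] //= /andP [Ht Hts] /andP [Ht' Hts'] [E1 E2].
  split; last exact: IH.
  by split; [exact: pi_eqJ | split; exact: K_in_QH].
rewrite !pi_of_K; apply/eq_in_map => k _; rewrite !JA_Jf !K_node !count_allpairs.
apply: J_sum => q.
exact: (Lcart QH_uniq Hrel).
Qed.


Lemma HF_fo c : c \in HF rank SB delta F -> finite_order SB c.
Proof.
case/allpairsP => [[a q] [Ha _ ->]] /=.
by apply: FOP.2; apply/HL_spec.2.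
Qed.

Lemma pA_gt0 : 0 < pA rank SB delta F.
Proof.
rewrite /pA; apply: foldr_lcm_gt0; apply/allP => x /mapP [c Hc ->].
by case: (index_spec (HF_fo Hc)).
Qed.

Lemma nsum_J c n : c \in HF rank SB delta F -> nsum SB (J n) c = nsum SB n c.
Proof.
move=> Hc; have [Hi0 Hp0 E] := index_spec (HF_fo Hc).
have Hle : Defs.index SB c <= iA rank SB delta F.
  by rewrite /iA; apply: (leq_bigmax_seq (F := fun b => Defs.index SB b)).
have Hd : period SB c %| pA rank SB delta F.
  by rewrite /pA; apply: dvdn_foldr_lcm; exact: map_f.
move: E Hle Hd Hi0 Hp0.
set i0 := Defs.index SB c; set p0 := period SB c; set iA0 := iA _ _ _ _; set pA0 := pA _ _ _ _.
move=> E Hle Hd Hi0 Hp0.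
rewrite /JA -/iA0 -/pA0; case: ltnP => Hn //.
rewrite (nsum_mod E (m := iA0 + _)); last by lia.
rewrite [RHS](nsum_mod E); last by lia.
congr (nsum SB (i0 + _) c).
have -> : n - i0 = (iA0 - i0) + (n - iA0) by lia.
have -> : iA0 + (n - iA0) %% pA0 - i0 = (iA0 - i0) + (n - iA0) %% pA0 by lia.
by rewrite -[in LHS]modnDmr (modn_dvdm _ Hd) modnDmr.
Qed.

Lemma FR_eq t : wf t -> FR rank SB delta F (piof t) = semA SB delta F t.
Proof.
move=> Hwf.
transitivity (\big[badd SB/zero]_(k <- K t) mul k.2 (F k.1)); last first.
  by rewrite /semA /sem_run /Klist bsum_big big_map.
rewrite (regroup _ _ QH_uniq (K_in_QH Hwf)).
rewrite /FR pi_of_K zip_map_l -map_comp bsum_big.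
apply: eq_big_seq => k Hk /=.
rewrite nsum_J //.
case: k Hk => q b; rewrite mem_QH /= => Hb.
by apply: (allpairs_f (fun a q => mul a (F q))); rewrite ?mem_enum.
Qed.

Local Notation QRl := (QR rank SB delta F).
Local Notation dR := (deltaR rank SB delta F).
Local Notation KR := (Klist SB QRl dR).

Lemma QR_spec : uniq QRl /\ forall p, p \in QRl <-> exists t, wf t /\ piof t = p.
Proof.
apply: enum_ofP.
exists (cart (nseq (size QHl) (iota 0 (iA rank SB delta F + pA rank SB delta F)))).
move=> p [t [_ <-]].
have Hs : size (piof t) = size QHl by rewrite /Defs.pi_of size_map.
rewrite -Hs; apply: mem_cart_nseq.
apply/allP => x /mapP [k _ ->].
rewrite /JA; have := pA_gt0.
case: (ltnP (pcount SB delta t k.1 k.2) (iA rank SB delta F)) => H Hp; first exact: ltn_addr.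
by rewrite ltn_add2l ltn_mod.
Qed.

Lemma deltaR_eq s ts q : wf (Node s ts) ->
  dR (map piof ts) s q = if q == piof (Node s ts) then one else zero.
Proof.
move=> Hwf; rewrite /deltaR; case: asboolP => [[ts' [Hwf' [Hm Hp]]]|Hn].
  by rewrite -Hp (determinacy Hwf' Hwf Hm) eqxx.
case: eqP => // Eq; exfalso; apply: Hn; exists ts; split => //.
Qed.

Lemma Wp_zero (T : Type) (ks : seq (T * B)) :
  ~~ all (fun k => k.2 != zero) ks -> Wp SB (map snd ks) = zero.
Proof.
elim: ks => //= k ks IH; rewrite negb_and negbK => /orP [/eqP ->|H].
  by rewrite sb_mul0l.
by rewrite IH // sb_mul0r.
Qed.

Lemma R_claim t : wf t -> filter (fun k => k.2 != zero) (KR t) = [:: (piof t, one)].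
Proof.
elim/tree_ind': t => s ts IH Hwf.
move: (Hwf); rewrite wf_node => /andP [_ Hall].
rewrite K_node filter_allpairs.
have Hc : cart (map (filter (fun k => k.2 != zero)) (map KR ts)) =
          [:: map (fun t => (piof t, one)) ts].
  rewrite -map_comp (map_ext_In (g := fun t => [:: (piof t, one)])) ?cart_single //.
  move=> t Ht /=; apply: IH => //; exact: In_all Hall Ht.
rewrite (@eq_map _ _ _ (fun q => if q == piof (Node s ts) then [:: (piof (Node s ts), one)] else [::])).
  apply: flatten_single; first exact: QR_spec.1.
  by apply/QR_spec.2; exists (Node s ts).
move=> q /=.
rewrite filter_map (filter_impl (b := all (fun k => k.2 != zero))); last first.
  move=> ks /=; apply: contraLR => Hn; rewrite negbK /comb /= Wp_zero // sb_mul0l //.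
rewrite filter_all_cart Hc /=.
have H10 : (one != zero) by apply/eqP => E; apply: (@sb_zero_neq_one _ SB); rewrite E.
rewrite /comb /=.
have EW : Wp SB (map snd (map (fun t => (piof t, one)) ts)) = one.
  by elim: ts {IH Hwf Hall Hc} => //= t ts ->; rewrite sb_mul1l.
have EF : map fst (map (fun t => (piof t, one)) ts) = map piof ts by rewrite -map_comp.
rewrite EW EF sb_mul1l deltaR_eq //.
case: (q =P piof (Node s ts)) => [->|Hne] /=; last by rewrite eqxx.
by rewrite H10 /= EW EF sb_mul1l deltaR_eq // eqxx.
Qed.

Lemma semR_eq t : wf t -> semR rank SB delta F t = FR rank SB delta F (piof t).
Proof.
move=> Hwf.
rewrite /semR /sem_run bsum_big.
transitivity (\big[badd SB/zero]_(k <- KR t) mul k.2 (FR rank SB delta F k.1)).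
  by rewrite /Klist big_map.
transitivity (\big[badd SB/zero]_(k <- KR t | k.2 != zero) mul k.2 (FR rank SB delta F k.1)).
  rewrite [RHS]big_mkcond; apply: eq_bigr => k _; case: ifP => // /negbFE/eqP ->.
  by rewrite sb_mul0l.
by rewrite -big_filter R_claim // big_seq1 sb_mul1l.
Qed.

End Main.

Unset Implicit Arguments.

Theorem theorem7p3 (Sigma : finType) (rank : Sigma -> nat)
  (Hnullary : exists s : Sigma, rank s = 0)
  (B : eqType) (SB : strong_bimonoid B)
  (Q : finType) (HQ : 0 < #|Q|)
  (delta : seq Q -> Sigma -> Q -> B) (F : Q -> B) :
  finite_order_property rank SB delta F ->
  forall t : tree Sigma, wf_tree rank t ->
    semR rank SB delta F t = semA SB delta F t.
Proof.
move=> FOP t Hwf.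
by rewrite (semR_eq FOP Hwf) (FR_eq FOP Hwf).
Qed.
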